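(* Let $a$ and $c$ be coprime positive integers with $a$ odd. Then for every integer $p\ge0$ and all $x,z\in\mathbb{R}$: if $c$ is even, $$\sum_{\mu=0}^{a-1}\mathcal{E}_{p}\Big(c\frac{\mu+x}{a}+z\Big)=a^{-p}\mathcal{E}_{p}(az+cx),$$ and if $c$ is odd, $$\sum_{\mu=0}^{a-1}(-1)^{\mu}\mathcal{E}_{p}\Big(c\frac{\mu+x}{a}+z\Big)=a^{-p}\mathcal{E}_{p}(az+cx).$$
   Context: $E_n(x)$ is the $n$th Euler polynomial, defined by $\frac{2e^{xt}}{e^t+1}=\sum_{n\ge0}E_n(x)\frac{t^n}{n!}$, and the $n$th Euler function $\mathcal{E}_n$ ($n\ge0$) is defined by $\mathcal{E}_n(x)=E_n(x)$ for $0\le x<1$ and $\mathcal{E}_n(x+m)=(-1)^m\mathcal{E}_n(x)$ for $m\in\mathbb{Z}$. *)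

(* Defs.v *)
From Stdlib Require Import Reals Lra Lia ZArith Arith.
Open Scope R_scope.

(* Euler polynomials E_n(x), defined by 2 e^{xt}/(e^t+1) = sum E_n(x) t^n/n!.
   Multiplying the generating function by (e^t+1) and comparing coefficients of
   t^n/n! gives  sum_{k=0}^{n} C(n,k) E_k(x) + E_n(x) = 2 x^n, i.e.
   E_0(x) = 1,  E_{m+1}(x) = x^{m+1} - 1/2 * sum_{k=0}^{m} C(m+1,k) E_k(x).
   [eul_upto n x k] = E_k(x) for k <= n. *)
Fixpoint eul_upto (n : nat) (x : R) : nat -> R :=
  match n with
  | O => fun _ => 1
  | S m =>
      let f := eul_upto m x in
      fun k => if (k <=? m)%nat then f k
               else x ^ (S m) - / 2 * sum_f_R0 (fun j => C (S m) j * f j) m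
  end.

Definition euler_poly (n : nat) (x : R) : R := eul_upto n x n.

Definition rfloor (y : R) : Z := (up y - 1)%Z.

Definition euler_fun (n : nat) (y : R) : R :=
  (if Z.even (rfloor y) then 1 else -1) * euler_poly n (y - IZR (rfloor y)).

(* Main.v *)
Require Import Defs.
From Stdlib Require Import Reals Lra Lia ZArith Znumtheory.
Open Scope R_scope.

Definition sg (q : Z) : R := if Z.even q then 1 else -1.

Lemma sgD u v : sg (u + v) = sg u * sg v.
Proof. unfold sg. rewrite Z.even_add. destruct (Z.even u), (Z.even v); simpl; ring. Qed.

Lemma sgM_odd a q : Z.odd a = true -> sg (a * q) = sg q.
Proof.
intro h. unfold sg. rewrite Z.even_mul, <- Z.negb_odd, h. reflexivity.
Qed.

Lemma sg_even_mul c m : Z.even c = true -> sg (c * m) = 1.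
Proof. intro h. unfold sg. rewrite Z.even_mul, h. reflexivity. Qed.

Lemma sg_nat k : sg (Z.of_nat k) = (-1) ^ k.
Proof.
induction k as [|k IH]; [reflexivity|].
rewrite Nat2Z.inj_succ, <- Z.add_1_r, sgD, IH. simpl. unfold sg. simpl. ring.
Qed.

Lemma sg_sq u : sg u * sg u = 1.
Proof. unfold sg. destruct (Z.even u); ring. Qed.

Lemma rfloor_spec y : IZR (rfloor y) <= y < IZR (rfloor y) + 1.
Proof.
unfold rfloor. destruct (archimed y) as [h1 h2]. rewrite minus_IZR. simpl. lra.
Qed.

Lemma rfloor_unique y k : IZR k <= y < IZR k + 1 -> rfloor y = k.
Proof.
intros [h1 h2]. unfold rfloor.
assert (e : (k + 1)%Z = up y). { apply tech_up; rewrite plus_IZR; simpl; lra. }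
lia.
Qed.

Lemma euler_fun_eval p y q t : y = IZR q + t -> 0 <= t < 1 ->
  euler_fun p y = sg q * euler_poly p t.
Proof.
intros hy ht. unfold euler_fun.
rewrite (rfloor_unique y q) by lra.
replace (y - IZR q) with t by lra. reflexivity.
Qed.

Lemma arg_eq (a c mu : nat) (x z : R) (n q r : Z) : (0 < a)%nat ->
  (Z.of_nat c * Z.of_nat mu + n = Z.of_nat a * q + r)%Z ->
  INR c * ((INR mu + x) / INR a) + z = IZR q + (IZR r + (INR a * z + INR c * x - IZR n)) / INR a.
Proof.
intros ha e.
apply (f_equal IZR) in e. rewrite !plus_IZR, !mult_IZR, <- !INR_IZR_INZ in e.
assert (H' : IZR r = INR c * INR mu + IZR n - INR a * IZR q) by lra.
rewrite H'. field. apply not_0_INR. lia.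
Qed.

Lemma arg_bounds (a : nat) (r : Z) t : (0 < a)%nat -> (0 <= r < Z.of_nat a)%Z -> 0 <= t < 1 ->
  0 <= (IZR r + t) / INR a < 1.
Proof.
intros ha hr ht.
assert (hA : 0 < INR a) by (apply lt_0_INR; lia).
assert (h1 : 0 <= IZR r) by (apply IZR_le; lia).
assert (h2 : IZR r <= INR a - 1).
{ rewrite INR_IZR_INZ. rewrite <- minus_IZR. apply IZR_le. lia. }
split.
- unfold Rdiv. apply Rmult_le_pos; [lra | left; apply Rinv_0_lt_compat; lra].
- apply (Rmult_lt_reg_r (INR a)); [lra|]. unfold Rdiv. rewrite Rmult_assoc, Rinv_l by lra. lra.
Qed.

Lemma rel_prime_of (a c : nat) : Nat.gcd a c = 1%nat -> rel_prime (Z.of_nat a) (Z.of_nat c).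
Proof.
intro h. apply bezout_rel_prime.
destruct (Nat.eq_dec a 0) as [->|ha].
- simpl in h. subst c. apply (Bezout_intro _ _ _ 0 1). reflexivity.
- destruct (Nat.gcd_bezout_pos a c ltac:(lia)) as [u [v e]].
  rewrite h in e. apply (Bezout_intro _ _ _ (Z.of_nat u) (- Z.of_nat v)). lia.
Qed.

Lemma modinj (a c m1 m2 : nat) (n : Z) : (0 < a)%nat -> Nat.gcd a c = 1%nat ->
  (m1 < a)%nat -> (m2 < a)%nat ->
  ((Z.of_nat c * Z.of_nat m1 + n) mod Z.of_nat a = (Z.of_nat c * Z.of_nat m2 + n) mod Z.of_nat a)%Z ->
  m1 = m2.
Proof.
intros ha hg h1 h2 e.
set (A := Z.of_nat a) in *.
assert (hA : (A <> 0)%Z) by (unfold A; lia).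
pose proof (Z.div_mod (Z.of_nat c * Z.of_nat m1 + n) A hA) as d1.
pose proof (Z.div_mod (Z.of_nat c * Z.of_nat m2 + n) A hA) as d2.
assert (hd : (A | Z.of_nat c * (Z.of_nat m1 - Z.of_nat m2))%Z).
{ exists ((Z.of_nat c * Z.of_nat m1 + n) / A - (Z.of_nat c * Z.of_nat m2 + n) / A)%Z. lia. }
apply Gauss in hd; [| apply rel_prime_of; exact hg].
destruct hd as [k hk]. unfold A in hk.
destruct (Z.lt_trichotomy k 0) as [hk0|[hk0|hk0]]; [nia| subst k; lia | nia].
Qed.

Lemma mod_bound (a : nat) (N : Z) : (0 < a)%nat -> (Z.to_nat (N mod Z.of_nat a) < a)%nat.
Proof. intro ha. pose proof (Z.mod_pos_bound N (Z.of_nat a) ltac:(lia)). lia. Qed.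

Lemma Zeven_nat c : Nat.even c = true -> Z.even (Z.of_nat c) = true.
Proof.
intro h. apply Nat.even_spec in h. destruct h as [k ->].
rewrite Nat2Z.inj_mul, Z.even_mul. reflexivity.
Qed.

Lemma Zodd_nat c : Nat.odd c = true -> Z.odd (Z.of_nat c) = true.
Proof.
intro h. apply Nat.odd_spec in h. destruct h as [k ->].
rewrite Nat2Z.inj_add, Nat2Z.inj_mul, Z.odd_add, Z.odd_mul. reflexivity.
Qed.

Lemma theta_bounds y : 0 <= y - IZR (rfloor y) < 1.
Proof. pose proof (rfloor_spec y). lra. Qed.

Lemma theta_eq y : y = IZR (rfloor y) + (y - IZR (rfloor y)).
Proof. ring. Qed.
Module Aux.
From mathcomp Require Import all_boot all_algebra.
From mathcomp Require Import Rstruct ring lra zify.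
Import GRing.Theory Num.Theory.
Local Open Scope ring_scope.

Definition E (n : nat) (x : R) : R := euler_poly n x.
Arguments E n%_nat_scope x%_ring_scope.

Lemma eul_upto_S m x k : (k <= m)%N -> eul_upto (S m) x k = eul_upto m x k.
Proof. move=> /leP hk. cbn [eul_upto]. by rewrite (proj2 (Nat.leb_le _ _) hk). Qed.

Lemma eul_upto_E n x k : (k <= n)%N -> eul_upto n x k = euler_poly k x.
Proof.
elim: n k => [|n IH] k hk; first by move: hk; rewrite leqn0 => /eqP ->.
case: (ltngtP k n.+1) hk => // [hk _ | -> _]; last by [].
by rewrite eul_upto_S // IH.
Qed.

Lemma sum_f_big f m : sum_f_R0 f m = \sum_(i < m.+1) f i.
Proof. elim: m => [|m IH]; first by rewrite big_ord1. by rewrite big_ord_recr /= -IH. Qed.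

Lemma fact_fac n : fact n = n`!.
Proof. elim: n => [|n IH] //=. by rewrite factS IH. Qed.

Lemma binR n m : (m <= n)%N -> ('C(n,m)%:R : R) = (n`!)%:R / ((m`!)%:R * ((n-m)`!)%:R).
Proof.
move=> h. rewrite -(bin_fact h) [in RHS]natrM [X in _ * X / _]natrM mulfK //.
by rewrite -natrM pnatr_eq0 -lt0n muln_gt0 !fact_gt0.
Qed.

Lemma C_bin n k : (k <= n)%N -> C n k = 'C(n,k)%:R.
Proof.
move=> h; rewrite binR // /C !fact_fac !INRE /Rdiv.
by [].
Qed.

Lemma E0 x : E 0 x = 1. Proof. by []. Qed.

Lemma ES m x : E m.+1 x = x ^+ m.+1 - 2^-1 * \sum_(j < m.+1) 'C(m.+1, j)%:R * E j x.
Proof.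
rewrite /E /euler_poly. cbn [eul_upto].
rewrite (proj2 (Nat.leb_gt _ _) (Nat.lt_succ_diag_r m)).
rewrite sum_f_big RpowE. congr (_ - _ * _).
apply: eq_bigr => j _. rewrite C_bin; last exact: ltnW (ltn_ord j).
by rewrite eul_upto_E // -ltnS.
Qed.
Lemma E_rec n x : \sum_(j < n.+1) 'C(n, j)%:R * E j x + E n x = 2 * x ^+ n.
Proof.
case: n => [|m]; first by rewrite big_ord1 bin0 E0 expr0 mulr1n mulr1; lra.
rewrite big_ord_recr /= binn mul1r.
set S := \sum_(j < m.+1) _. rewrite ES -/S. lra.
Qed.

Lemma E_uniq (g : nat -> R) x :
  (forall n, \sum_(j < n.+1) 'C(n, j)%:R * g j + g n = 2 * x ^+ n) ->
  forall n, g n = E n x.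
Proof.
move=> Hg n; elim/ltn_ind: n => n IH.
have h1 := Hg n; have h2 := E_rec n x.
rewrite big_ord_recr /= in h1; rewrite big_ord_recr /= in h2.
have eqS : \sum_(i < n) 'C(n, i)%:R * g i = \sum_(i < n) 'C(n, i)%:R * E i x.
  by apply: eq_bigr => i _; rewrite IH.
rewrite eqS binn mulr1n mul1r in h1; rewrite binn mulr1n mul1r in h2. lra.
Qed.

Lemma binCC n m j : (j <= m)%N -> (m <= n)%N ->
  'C(n, m)%:R * 'C(m, j)%:R = 'C(n, j)%:R * 'C(n - j, m - j)%:R :> R.
Proof.
move=> hjm hmn.
have hjn : (j <= n)%N by apply: leq_trans hmn.
have hh : (m - j <= n - j)%N by rewrite leq_sub2r.
rewrite !binR //.
have -> : (n - j - (m - j) = n - m)%N by lia.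
have f1 := fact_gt0; have nz : forall k, (k`!%:R : R) != 0 by move=> k; rewrite pnatr_eq0 -lt0n.
move: (nz n) (nz m) (nz j) (nz (n-m)%N) (nz (m-j)%N) (nz (n-j)%N).
set A := n`!%:R; set B := m`!%:R; set Cc := j`!%:R; set D := (n-m)`!%:R; set F := (m-j)`!%:R; set G := (n-j)`!%:R.
move=> *. field. by rewrite !nz.
Qed.

Lemma comp (e : nat -> R) s t n :
  \sum_(m < n.+1) 'C(n, m)%:R * s ^+ (n - m) * (\sum_(j < m.+1) 'C(m, j)%:R * e j * t ^+ (m - j))
  = \sum_(j < n.+1) 'C(n, j)%:R * e j * (s + t) ^+ (n - j).
Proof.
transitivity (\sum_(m < n.+1) \sum_(j < n.+1)
   'C(n, m)%:R * s ^+ (n - m) * ('C(m, j)%:R * e j * t ^+ (m - j))).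
  apply: eq_bigr => m _; rewrite mulr_sumr.
  rewrite (big_ord_widen n.+1 (fun j => 'C(n, m)%:R * s ^+ (n - m) * ('C(m, j)%:R * e j * t ^+ (m - j)))) //.
  rewrite big_mkcond /=; apply: eq_bigr => j _.
  case: ifP => // /negbT; rewrite -leqNgt => hj.
  by rewrite (bin_small hj) !mul0r mulr0.
rewrite exchange_big /=; apply: eq_bigr => j _.
have hj : (j <= n)%N by rewrite -ltnS.
rewrite -(big_mkord xpredT (fun m => 'C(n, m)%:R * s ^+ (n - m) * ('C(m, j)%:R * e j * t ^+ (m - j)))).
rewrite (@big_cat_nat _ _ _ j) /=; [|by []|by rewrite ltnW].
rewrite big1_seq; last first.
  move=> m; rewrite mem_index_iota => /andP [_ hm].
  by rewrite (bin_small hm) !mul0r mulr0.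
rewrite add0r.
rewrite -{1}(add0n j) big_addn subSn // big_mkord.
rewrite exprDn mulr_sumr; apply: eq_bigr => i _.
have hi : (i <= n - j)%N by rewrite -ltnS.
have -> : (n - (i + j) = n - j - i)%N by lia.
have -> : (i + j - j = i)%N by lia.
have hijn : (i + j <= n)%N by lia.
have hC := @binCC n (i + j) j (leq_addl i j) hijn.
rewrite (_ : (i + j - j = i)%N) in hC; last by lia.
transitivity (('C(n, i + j)%:R * 'C(i + j, j)%:R) * e j * s ^+ (n - j - i) * t ^+ i).
  by rewrite mulrA mulrAC; ring.
rewrite hC. rewrite -[X in _ = _ * _ * X]mulr_natr. ring.
Qed.

Lemma Appell n x h : E n (x + h) = \sum_(j < n.+1) 'C(n, j)%:R * E j x * h ^+ (n - j).
Proof.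
pose g m := \sum_(j < m.+1) 'C(m, j)%:R * E j x * h ^+ (m - j).
symmetry; apply: (E_uniq g) => {}n.
have c1 := comp (fun j => E j x) 1 h n.
have c2 := comp (fun j => E j x) h 1 n.
have e1 : \sum_(m < n.+1) 'C(n, m)%:R * g m
   = \sum_(j < n.+1) 'C(n, j)%:R * E j x * (1 + h) ^+ (n - j).
  rewrite -c1; apply: eq_bigr => m _; by rewrite expr1n mulr1.
rewrite e1 [x + h]addrC exprDn mulr_sumr.
transitivity (\sum_(i < n.+1) 'C(n, i)%:R * h ^+ (n - i) * (\sum_(j < i.+1) 'C(i, j)%:R * E j x * 1 ^+ (i - j))
   + \sum_(i < n.+1) 'C(n, i)%:R * h ^+ (n - i) * E i x); last first.
  rewrite -big_split; apply: eq_bigr => i _ /=.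
  have H := E_rec i x.
  under eq_bigr do rewrite expr1n mulr1.
  transitivity ('C(n, i)%:R * h ^+ (n - i) * (2 * x ^+ i)); first by rewrite -H; ring.
  rewrite -[_ *+ 'C(n, i)]mulr_natr; ring.
rewrite c2; congr (_ + _).
  by apply: eq_bigr => j _; rewrite addrC.
by rewrite /g; apply: eq_bigr => j _; ring.
Qed.

Lemma Eshift1 n v : E n (v + 1) + E n v = 2 * v ^+ n.
Proof.
rewrite Appell -(E_rec n v); congr (_ + _).
by apply: eq_bigr => j _; rewrite expr1n mulr1.
Qed.

Lemma mult_formula (a' : nat) n (y : R) : ~~ odd a' ->
  (a'.+1%:R) ^+ n * \sum_(k < a'.+1) (-1) ^+ k * E n ((y + k%:R) / a'.+1%:R) = E n y.
Proof.
move=> ev.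
set a : R := a'.+1%:R.
have anz : a != 0 by rewrite /a pnatr_eq0.
pose g m := a ^+ m * \sum_(k < a'.+1) (-1) ^+ k * E m ((y + k%:R) / a).
apply: (E_uniq g) => {}n.
have key : forall k : nat, \sum_(j < n.+1) 'C(n, j)%:R * (a ^+ j * E j ((y + k%:R) / a))
    = a ^+ n * E n ((y + k.+1%:R) / a).
  move=> k.
  have -> : (y + k.+1%:R) / a = (y + k%:R) / a + a^-1.
    by rewrite -[k.+1]addn1 natrD addrA mulrDl mul1r.
  rewrite Appell mulr_sumr; apply: eq_bigr => j _.
  have hj : (j <= n)%N by rewrite -ltnS.
  rewrite exprVn.
  have -> : a ^+ n = a ^+ j * a ^+ (n - j) by rewrite -exprD subnKC.
  have : a ^+ (n - j) != 0 by rewrite expf_neq0.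
  move: (a ^+ (n - j)) => A hA. field. done.
transitivity (a ^+ n * (\sum_(k < a'.+1) (-1) ^+ k * E n ((y + k.+1%:R) / a)
     + \sum_(k < a'.+1) (-1) ^+ k * E n ((y + k%:R) / a))).
  rewrite /g mulrDr; congr (_ + _).
  rewrite (eq_bigr (fun j : 'I_n.+1 => \sum_(k < a'.+1) 'C(n, j)%:R * (a ^+ j * ((-1) ^+ k * E j ((y + k%:R) / a))))); last first.
    by move=> j _; rewrite mulr_sumr mulr_sumr.
  rewrite exchange_big /= mulr_sumr; apply: eq_bigr => k _.
  transitivity ((-1) ^+ k * (a ^+ n * E n ((y + k.+1%:R) / a))); last by ring.
  rewrite -(key k) mulr_sumr; apply: eq_bigr => j _; ring.
rewrite big_ord_recr /= [X in _ + X]big_ord_recl /=.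
set S1 := \sum_(i < a') _. set S2 := \sum_(i < a') _.
have -> : S2 = - S1.
  rewrite /S1 /S2 -sumrN; apply: eq_bigr => i _.
  rewrite /bump /= add1n exprS; ring.
rewrite (_ : (-1) ^+ a' = 1 :> R); last by rewrite -signr_odd (negbTE ev).
have -> : (y + a'.+1%:R) / a = y / a + 1 by rewrite -/a mulrDl divff.
rewrite expr0 !mul1r addr0.
have := Eshift1 n (y / a).
move=> H.
rewrite (_ : S1 + E n (y / a + 1) + (E n (y / a) + - S1) = 2 * (y / a) ^+ n); last by rewrite -H; ring.
rewrite exprMn exprVn. field. by rewrite expf_neq0.
Qed.

Lemma oddE n : Nat.odd n = odd n.
Proof. elim: n => [|n IH] //. by rewrite Nat.odd_succ -Nat.negb_odd IH. Qed.

Definition hfun (a' c : nat) (n : Z) (mu : 'I_a'.+1) : 'I_a'.+1 :=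
  Ordinal (introT ltP (mod_bound a'.+1 (Z.of_nat c * Z.of_nat mu + n) (Nat.lt_0_succ a'))).

Lemma hinj a' c n : Nat.gcd a'.+1 c = 1%N -> injective (hfun a' c n).
Proof.
move=> hg m1 m2 /(congr1 val) /= e. apply/val_inj => /=.
have hA : Z.lt Z0 (Z.of_nat a'.+1) by lia.
have b1 := Z.mod_pos_bound (Z.of_nat c * Z.of_nat m1 + n) _ hA.
have b2 := Z.mod_pos_bound (Z.of_nat c * Z.of_nat m2 + n) _ hA.
apply: (@modinj a'.+1 c m1 m2 n) => //; try (apply/ltP; exact: ltn_ord).
  exact: Nat.lt_0_succ.
lia.
Qed.

Lemma sg_sqR u : sg u * sg u = 1.
Proof. exact: sg_sq. Qed.

Local Open Scope R_scope.
Lemma key_term a' c n θ p x z (ev : ~~ odd a')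
  (hn : θ = INR a'.+1 * z + INR c * x - IZR n) (hθ : 0 <= θ < 1) (mu : 'I_a'.+1) :
  euler_fun p (INR c * ((INR mu + x) / INR a'.+1) + z) =
   (sg (Z.of_nat c * Z.of_nat mu) * sg n * ((-1) ^+ (hfun a' c n mu) * E p ((θ + (hfun a' c n mu)%:R) / a'.+1%:R)))%R.
Proof.
Local Open Scope ring_scope.
set N := Z.add (Z.mul (Z.of_nat c) (Z.of_nat mu)) n.
set A := Z.of_nat a'.+1.
have hA : A <> Z0 by rewrite /A; lia.
have d := Z.div_mod N A hA.
have hb := Z.mod_pos_bound N A ltac:(rewrite /A; lia).
set r := Z.to_nat (Z.modulo N A).
have hr : Z.of_nat r = (Z.modulo N A) by rewrite /r Z2Nat.id //; lia.
have hv : nat_of_ord (hfun a' c n mu) = r by [].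
rewrite (@euler_fun_eval p _ (Z.div N A) ((IZR (Z.modulo N A) + θ) / INR a'.+1)); last first.
- apply: arg_bounds => //; first exact: Nat.lt_0_succ.
- rewrite hn. apply: arg_eq; first exact: Nat.lt_0_succ. exact: d.
have Aodd : Z.odd A = true by rewrite /A; apply: Zodd_nat; rewrite oddE /=; exact: ev.
have e1 : sg N = sg (Z.div N A) * sg (Z.modulo N A) by rewrite {1}d sgD sgM_odd.
have e2 : sg N = sg (Z.of_nat c * Z.of_nat mu) * sg n by rewrite /N sgD.
have e3 : sg (Z.div N A) = sg (Z.of_nat c * Z.of_nat mu) * sg n * sg (Z.modulo N A).
  rewrite -e2 e1 -mulrA sg_sqR mulr1 //.
rewrite e3 hv -hr sg_nat RpowE -INR_IZR_INZ !INRE /E.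
rewrite !RmultE !RplusE !RdivE.
rewrite [_ + θ]addrC. ring.
Qed.

Local Open Scope R_scope.
Lemma main_aux (a c : nat) (hcop : Nat.gcd a c = 1%nat) (hodd : Nat.odd a = true)
  (p : nat) (x z : R) :
  (Nat.even c = true ->
     sum_f_R0 (fun mu => euler_fun p (INR c * ((INR mu + x) / INR a) + z)) (a - 1)
     = / (INR a) ^ p * euler_fun p (INR a * z + INR c * x)) /\
  (Nat.odd c = true ->
     sum_f_R0 (fun mu => (-1) ^ mu * euler_fun p (INR c * ((INR mu + x) / INR a) + z)) (a - 1)
     = / (INR a) ^ p * euler_fun p (INR a * z + INR c * x)).
Proof.
Local Open Scope ring_scope.
case: a hcop hodd => [|a'] hcop hodd; first by [].
have ev : ~~ odd a' by move: hodd; rewrite oddE.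
set w := Rplus (Rmult (INR a'.+1) z) (Rmult (INR c) x).
set n := rfloor w.
set θ := Rminus w (IZR n).
have hθ : Rle 0 θ /\ Rlt θ 1 := theta_bounds w.
have hn : θ = Rminus (Rplus (Rmult (INR a'.+1) z) (Rmult (INR c) x)) (IZR n) by [].
have rhs : Rmult (Rinv (pow (INR a'.+1) p)) (euler_fun p w)
    = sg n * \sum_(k < a'.+1) (-1) ^+ k * E p ((θ + k%:R) / a'.+1%:R).
  rewrite (@euler_fun_eval p w n θ (theta_eq w) hθ).
  rewrite -[euler_poly p θ]/(E p θ) -(@mult_formula a' p θ ev) RpowE RinvE INRE !RmultE.
  rewrite mulrCA mulKf //. by rewrite expf_neq0 // pnatr_eq0.
have hsum : forall f, sum_f_R0 f (a'.+1 - 1) = \sum_(i < a'.+1) f i.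
  by move=> f; rewrite subn1 /= sum_f_big.
split => hc.
- rewrite hsum rhs [in RHS](reindex_inj (@hinj a' c n hcop)) /= mulr_sumr.
  apply: eq_bigr => mu _.
  rewrite (@key_term a' c n θ p x z ev hn hθ) sg_even_mul; last exact: Zeven_nat.
  by rewrite mul1r.
- rewrite hsum rhs [in RHS](reindex_inj (@hinj a' c n hcop)) /= mulr_sumr.
  apply: eq_bigr => mu _.
  rewrite (@key_term a' c n θ p x z ev hn hθ) sgM_odd; last exact: Zodd_nat.
  rewrite -sg_nat !RmultE mulrA mulrA sg_sqR mul1r //.
Qed.
End Aux.

Open Scope R_scope.

Theorem lemma1 (a c : nat) (ha : (0 < a)%nat) (hc : (0 < c)%nat)
  (hcop : Nat.gcd a c = 1%nat) (hodd : Nat.odd a = true)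
  (p : nat) (x z : R) :
  (Nat.even c = true ->
     sum_f_R0 (fun mu => euler_fun p (INR c * ((INR mu + x) / INR a) + z)) (a - 1)
     = / (INR a) ^ p * euler_fun p (INR a * z + INR c * x)) /\
  (Nat.odd c = true ->
     sum_f_R0 (fun mu => (-1) ^ mu * euler_fun p (INR c * ((INR mu + x) / INR a) + z)) (a - 1)
     = / (INR a) ^ p * euler_fun p (INR a * z + INR c * x)).
Proof.
  exact (Aux.main_aux a c hcop hodd p x z).
Qed.
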